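(* Consider the protocol $P_{RL}$ with parameter $N$ on a directed ring of size $n$ with $2\le n\le N$. Let $\mathcal{S}_{RL}$ be the set of configurations in $\mathcal{C}_{NI}$ (defined in the context) in which exactly one agent is a leader. Then $\mathcal{S}_{RL}$ is closed (no configuration outside $\mathcal{S}_{RL}$ is reachable from a configuration in $\mathcal{S}_{RL}$), and every configuration in $\mathcal{S}_{RL}$ is safe.
   Context: Model. A population is a directed ring of $n\ge 2$ anonymous agents $u_0,\dots,u_{n-1}$ (indices modulo $n$) with arcs $e_i=(u_i,u_{i+1})$. A configuration $C$ assigns a state to each agent; $C\to C'$ means that $C'$ is obtained from $C$ by one interaction on some arc $e_i$, in which initiator $u_i$ and responder $u_{i+1}$ update their states by the transition function and all other agents keep their states. A configuration is reachable from $C$ if it is obtained from $C$ by finitely many such steps. A configuration $C$ is safe if (i) exactly one agent outputs $L$ and all others output $F$ in $C$, and (ii) in every configuration reachable from $C$ each agent has the same output as in $C$. Protocol $P_{RL}$ (parameter $N$). Each agent has variables $\mathit{leader}\in\{0,1\}$, $\mathit{bullet}\in\{0,1,2\}$, $\mathit{shield}\in\{0,1\}$, $\mathit{signal}\in\{0,1\}$, $\mathit{dist}\in\{0,\dots,N\}$; it outputs $L$ if $\mathit{leader}=1$ (leader) and $F$ otherwise (follower). In an interaction with initiator $l$ and responder $r$ the following are executed in order: 1. If $l.\mathit{leader}=1$ then $l.\mathit{dist}\gets 0$. 2. If $r.\mathit{leader}=1$ then $r.\mathit{dist}\gets 0$; else if $r.\mathit{bullet}=0$ then $r.\mathit{dist}\gets\min(l.\mathit{dist}+1,N)$.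 3. If $r.\mathit{dist}=N$ then $r.\mathit{leader}\gets1$, $r.\mathit{bullet}\gets2$, $r.\mathit{shield}\gets1$, $r.\mathit{signal}\gets0$, $r.\mathit{dist}\gets0$. 4. If $l.\mathit{leader}=1$ and $l.\mathit{signal}=1$ then $l.\mathit{bullet}\gets2$, $l.\mathit{shield}\gets1$, $l.\mathit{signal}\gets0$. 5. If $r.\mathit{leader}=1$ and $r.\mathit{signal}=1$ then $r.\mathit{bullet}\gets1$, $r.\mathit{shield}\gets0$, $r.\mathit{signal}\gets0$. 6. If $l.\mathit{bullet}>0$ and $r.\mathit{leader}=1$: set $r.\mathit{leader}\gets0$ if ($l.\mathit{bullet}=2$ and $r.\mathit{shield}=0$); then $l.\mathit{bullet}\gets0$. Else, if $l.\mathit{bullet}>0$ and $r.\mathit{leader}=0$: if $r.\mathit{bullet}=0$ then $r.\mathit{bullet}\gets l.\mathit{bullet}$; then $l.\mathit{bullet}\gets0$ and $r.\mathit{signal}\gets0$. 7. $l.\mathit{signal}\gets\max(l.\mathit{signal},r.\mathit{signal},r.\mathit{leader})$. Definitions (in a configuration with at least one leader). $\mathrm{dist}_L(i)=\min\{j\ge0: u_{i-j}.\mathit{leader}=1\}$ and $\mathrm{dist}_R(i)=\min\{j\ge0: u_{i+j}.\mathit{leader}=1\}$. $\mathrm{peaceful}(i)$ holds iff $u_{i-\mathrm{dist}_L(i)}.\mathit{shield}=1$ and $u_{i-j}.\mathit{signal}=0$ for all $0\le j\le\mathrm{dist}_L(i)$. $\mathrm{modest}(i)$ holds iff $\mathrm{peaceful}(i)$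 holds and $u_{i-j}.\mathit{dist}\le\mathrm{dist}_L(i-j)$ for all $0\le j\le\mathrm{dist}_L(i)$. $\mathrm{secure}(i)$ holds iff $u_i.\mathit{dist}=0$ when $u_i.\mathit{leader}=1$, and $u_i.\mathit{dist}\le N-\mathrm{dist}_R(i)$ when $u_i.\mathit{leader}=0$. $\mathcal{C}_{PB}$ is the set of configurations with at least one leader in which every $u_j$ with $u_j.\mathit{bullet}=2$ satisfies $\mathrm{peaceful}(j)$. $\mathcal{C}_{NI}$ is the set of configurations in $\mathcal{C}_{PB}$ in which every agent $u_i$ satisfies $\mathrm{secure}(i)$ and every $u_j$ with $u_j.\mathit{bullet}=2$ satisfies $\mathrm{modest}(j)$. *)

(* Defs.v *)
From mathcomp Require Import all_boot.
Set Implicit Arguments. Unset Strict Implicit. Unset Printing Implicit Defensive.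

Section Protocol.
Variable N : nat.

(* Agent state: leader, shield, signal in {0,1} (as bool, 1 = true);
   bullet in {0,1,2} ('I_3); dist in {0,...,N} ('I_N.+1). *)
Record St := mkSt {
  leader : bool; bullet : 'I_3; shield : bool; signal : bool; dist : 'I_N.+1 }.

Definition set_dist (s : St) (d : 'I_N.+1) : St :=
  mkSt (leader s) (bullet s) (shield s) (signal s) d.
Definition set_leader (s : St) (b : bool) : St :=
  mkSt b (bullet s) (shield s) (signal s) (dist s).
Definition set_bullet (s : St) (b : 'I_3) : St :=
  mkSt (leader s) b (shield s) (signal s) (dist s).
Definition set_signal (s : St) (b : bool) : St :=
  mkSt (leader s) (bullet s) (shield s) b (dist s).
Definition set_bss (s : St) (b : 'I_3) (sh sg : bool) : St :=
  mkSt (leader s) b sh sg (dist s).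

(* Transition function: initiator l, responder r; steps 1-7 executed in order. *)
Definition delta (l r : St) : St * St :=
  let l1 := if leader l then set_dist l (inord 0) else l in
  let r2 := if leader r then set_dist r (inord 0)
            else if nat_of_ord (bullet r) == 0 then
                   set_dist r (inord (minn (dist l1).+1 N))
            else r in
  let r3 := if nat_of_ord (dist r2) == N
            then mkSt true (inord 2) true false (inord 0) else r2 in
  let l4 := if leader l1 && signal l1 then set_bss l1 (inord 2) true false else l1 in
  let r5 := if leader r3 && signal r3 then set_bss r3 (inord 1) false false else r3 in
  let '(l6, r6) :=
    if (0 < bullet l4) && leader r5 then
      let r' := if (nat_of_ord (bullet l4) == 2) && ~~ shield r5
                then set_leader r5 false else r5 in
      (set_bullet l4 (inord 0), r')
    else if (0 < bullet l4) && ~~ leader r5 then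
      let r' := if nat_of_ord (bullet r5) == 0 then set_bullet r5 (bullet l4) else r5 in
      (set_bullet l4 (inord 0), set_signal r' false)
    else (l4, r5) in
  let l7 := set_signal l6 [|| signal l6, signal r6 | leader r6] in
  (l7, r6).

Variable n : nat.

Definition config := 'I_n -> St.

Definition rnext (i : 'I_n) : 'I_n := ordS i.
Definition rprev (i : 'I_n) : 'I_n := ord_pred i.

Definition interact (C : config) (i : 'I_n) : config :=
  fun k => if k == i then (delta (C i) (C (rnext i))).1
           else if k == rnext i then (delta (C i) (C (rnext i))).2
           else C k.

Definition step (C C' : config) : Prop := exists i, C' = interact C i.

Inductive reachable (C : config) : config -> Prop :=
| reach_refl : reachable C C
| reach_step : forall C' C'', reachable C C' -> step C' C'' -> reachable C C''.

Inductive output := OL | OF.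
Definition out (s : St) : output := if leader s then OL else OF.

Definition unique_leader (C : config) : Prop :=
  exists i, forall j, leader (C j) = (j == i).

Definition safe (C : config) : Prop :=
  unique_leader C /\
  forall C', reachable C C' -> forall i, out (C' i) = out (C i).

Definition back (j : nat) (i : 'I_n) : 'I_n := iter j rprev i.
Definition fwd (j : nat) (i : 'I_n) : 'I_n := iter j rnext i.

(* dist_L(i) = min {j >= 0 : u_{i-j} is a leader}; in a configuration with at
   least one leader this minimum is < n, hence found in iota 0 n. *)
Definition distL (C : config) (i : 'I_n) : nat :=
  find (fun j => leader (C (back j i))) (iota 0 n).
Definition distR (C : config) (i : 'I_n) : nat :=
  find (fun j => leader (C (fwd j i))) (iota 0 n).

Definition peaceful (C : config) (i : 'I_n) : Prop :=
  shield (C (back (distL C i) i)) /\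
  forall j, j <= distL C i -> signal (C (back j i)) = false.

Definition modest (C : config) (i : 'I_n) : Prop :=
  peaceful C i /\
  forall j, j <= distL C i -> dist (C (back j i)) <= distL C (back j i).

Definition secure (C : config) (i : 'I_n) : Prop :=
  if leader (C i) then nat_of_ord (dist (C i)) = 0
  else dist (C i) <= N - distR C i.

Definition has_leader (C : config) : Prop := exists i, leader (C i).

Definition C_PB (C : config) : Prop :=
  has_leader C /\ forall j, nat_of_ord (bullet (C j)) = 2 -> peaceful C j.

Definition C_NI (C : config) : Prop :=
  C_PB C /\ (forall i, secure C i) /\
  (forall j, nat_of_ord (bullet (C j)) = 2 -> modest C j).

Definition S_RL (C : config) : Prop := C_NI C /\ unique_leader C.

End Protocol.

(* Main.v *)
Require Import Defs.
From mathcomp Require Import all_boot.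
From mathcomp Require Import zify.
Set Implicit Arguments. Unset Strict Implicit. Unset Printing Implicit Defensive.


Lemma val_fwd n (i : 'I_n) e : nat_of_ord (fwd e i) = (i + e) %% n.
Proof.
elim: e => [|e IH] /=; first by rewrite addn0 modn_small.
rewrite /rnext /ordS /= IH -addn1 modnDml addn1 addnS //.
Qed.

Lemma fwd_inj n (i : 'I_n) e e' : e < n -> e' < n -> fwd e i = fwd e' i -> e = e'.
Proof.
move=> He He' /(congr1 val) /=; rewrite !val_fwd => /eqP.
by rewrite eqn_modDl !modn_small // => /eqP.
Qed.

Lemma fwd_eq n (i : 'I_n) e e' : e < n -> e' < n -> (fwd e i == fwd e' i) = (e == e').
Proof.
move=> He He'; apply/eqP/eqP => [|->//]; exact: fwd_inj.
Qed.

Lemma fwd_n n (i : 'I_n) : fwd n i = i.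
Proof. apply: val_inj; rewrite /= val_fwd modnDr modn_small //. Qed.

Lemma fwd_surj n (i k : 'I_n) : exists2 e, e < n & k = fwd e i.
Proof.
exists ((k + (n - i)) %% n); first by rewrite ltn_mod; case: (n) i => [[]|].
apply: val_inj; rewrite /= val_fwd modnDmr.
have -> : i + (k + (n - i)) = k + n by have := ltn_ord i; lia.
by rewrite modnDr modn_small.
Qed.

Lemma back_fwd n (i : 'I_n) j e : j <= e -> back j (fwd e i) = fwd (e - j) i.
Proof.
elim: j => [|j IH] Hj; first by rewrite subn0.
rewrite /back iterS -/(back j _) IH ?(ltnW Hj) //.
have -> : e - j = (e - j.+1).+1 by lia.
by rewrite /= /rprev ordSK.
Qed.

Lemma fwd_add n (i : 'I_n) j e : fwd j (fwd e i) = fwd (j + e) i.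
Proof. by rewrite /fwd iterD. Qed.

Lemma find_eq (P : pred nat) m e : e < m -> P e -> (forall j, j < e -> ~~ P j) ->
  find P (iota 0 m) = e.
Proof.
move=> Hem HPe Hb.
have Hh : has P (iota 0 m) by apply/hasP; exists e => //; rewrite mem_iota.
have Hf := Hh; rewrite has_find size_iota in Hf.
case: (ltngtP (find P (iota 0 m)) e) => // H.
- have := nth_find 0 Hh; rewrite nth_iota // add0n => HP.
  by have := Hb _ H; rewrite HP.
- by have := before_find 0 H; rewrite nth_iota // add0n HPe.
Qed.

Lemma distL_fwd N n (C : config N n) (l : 'I_n) e :
  (forall k, leader (C k) = (k == l)) -> e < n -> distL C (fwd e l) = e.
Proof.
move=> Hl He; rewrite /distL; apply: find_eq => //=.
  by rewrite back_fwd // subnn Hl.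
move=> j Hj; rewrite back_fwd ?(ltnW Hj) // Hl.
rewrite -{2}[l]/(fwd 0 l) fwd_eq //; lia.
Qed.

Lemma distR_fwd N n (C : config N n) (l : 'I_n) e :
  (forall k, leader (C k) = (k == l)) -> 0 < e < n -> distR C (fwd e l) = n - e.
Proof.
move=> Hl /andP [He0 He]; rewrite /distR; apply: find_eq => /=; first lia.
  by rewrite fwd_add subnK ?(ltnW He) // fwd_n Hl.
move=> j Hj; rewrite fwd_add Hl.
rewrite -{2}[l]/(fwd 0 l) fwd_eq //; lia.
Qed.

Lemma in0 (N : nat) : nat_of_ord (@inord N 0) = 0. Proof. by rewrite inordK. Qed.
Lemma inmin (N : nat) k : nat_of_ord (@inord N (minn k N)) = minn k N.
Proof. rewrite inordK //; rewrite ltnS; exact: geq_minr. Qed.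
Lemma b0 : nat_of_ord (@inord 2 0) = 0. Proof. by rewrite inordK. Qed.
Lemma b1 : nat_of_ord (@inord 2 1) = 1. Proof. by rewrite inordK. Qed.
Lemma b2 : nat_of_ord (@inord 2 2) = 2. Proof. by rewrite inordK. Qed.

Definition good (N : nat) (s : St N) (e : nat) := signal s = false /\ dist s <= e.

Ltac fin1 := intros; repeat match goal with H: _ /\ _ |- _ => destruct H end; try subst; simpl in *.
Ltac fin := repeat (first [progress fin1 | split]); try done; lia.
Ltac crush := rewrite ?in0 ?inmin ?b0 ?b1 ?b2 /=;
  repeat (case: ifP => /=; rewrite ?in0 ?inmin ?b0 ?b1 ?b2 /=);
  rewrite /good /= ?in0 ?inmin ?b0 ?b1 ?b2;
  try solve [fin | left; fin | right; left; fin | right; right; fin].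

Lemma mid1 (N : nat) (n d : nat) (ll : bool) lb lsh lsg (ld : 'I_N.+1) rb rsh rsg (rd : 'I_N.+1) :
  let l := mkSt ll lb lsh lsg ld in let r := mkSt false rb rsh rsg rd in
  d.+1 < n -> n <= N -> ll = (d == 0) ->
  (if ll then nat_of_ord ld = 0 else ld + n <= N + d) ->
  rd + n <= N + d.+1 ->
  let l' := (delta l r).1 in let r' := (delta l r).2 in
  leader l' = ll /\ leader r' = false.
Proof.
rewrite /=; move=> Hdn HnN Hll Hld Hrd.
case: lb => [[|[|[|?]]] Hlb] //; case: rb => [[|[|[|?]]] Hrb] //.
all: case: ll Hll Hld => Hll Hld.
all: rewrite /delta /=.
all: crush.
Qed.

Lemma mid2 (N : nat) (n d : nat) (ll : bool) lb lsh lsg (ld : 'I_N.+1) rb rsh rsg (rd : 'I_N.+1) :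
  let l := mkSt ll lb lsh lsg ld in let r := mkSt false rb rsh rsg rd in
  d.+1 < n -> n <= N -> ll = (d == 0) ->
  (if ll then nat_of_ord ld = 0 else ld + n <= N + d) ->
  rd + n <= N + d.+1 ->
  let l' := (delta l r).1 in let r' := (delta l r).2 in
  (if ll then nat_of_ord (dist l') = 0 else dist l' + n <= N + d) /\ dist r' + n <= N + d.+1.
Proof.
rewrite /=; move=> Hdn HnN Hll Hld Hrd.
case: lb => [[|[|[|?]]] Hlb] //; case: rb => [[|[|[|?]]] Hrb] //.
all: case: ll Hll Hld => Hll Hld.
all: rewrite /delta /=.
all: crush.
Qed.

Lemma mid3 (N : nat) (n d : nat) (ll : bool) lb lsh lsg (ld : 'I_N.+1) rb rsh rsg (rd : 'I_N.+1) :
  let l := mkSt ll lb lsh lsg ld in let r := mkSt false rb rsh rsg rd in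
  d.+1 < n -> n <= N -> ll = (d == 0) ->
  (if ll then nat_of_ord ld = 0 else ld + n <= N + d) ->
  rd + n <= N + d.+1 ->
  let l' := (delta l r).1 in let r' := (delta l r).2 in
  nat_of_ord (bullet l') <> 2.
Proof.
rewrite /=; move=> Hdn HnN Hll Hld Hrd.
case: lb => [[|[|[|?]]] Hlb] //; case: rb => [[|[|[|?]]] Hrb] //.
all: case: ll Hll Hld => Hll Hld.
all: rewrite /delta /=.
all: crush.
Qed.

Lemma mid4 (N : nat) (n d : nat) (ll : bool) lb lsh lsg (ld : 'I_N.+1) rb rsh rsg (rd : 'I_N.+1) :
  let l := mkSt ll lb lsh lsg ld in let r := mkSt false rb rsh rsg rd in
  d.+1 < n -> n <= N -> ll = (d == 0) ->
  (if ll then nat_of_ord ld = 0 else ld + n <= N + d) ->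
  rd + n <= N + d.+1 ->
  let l' := (delta l r).1 in let r' := (delta l r).2 in
  good l d -> good r d.+1 -> (ll -> lsh) -> [/\ good l' d, good r' d.+1 & (ll -> shield l')].
Proof.
rewrite /=; move=> Hdn HnN Hll Hld Hrd.
case: lb => [[|[|[|?]]] Hlb] //; case: rb => [[|[|[|?]]] Hrb] //.
all: case: ll Hll Hld => Hll Hld.
all: rewrite /delta /=.
all: crush.
Qed.

Lemma mid5 (N : nat) (n d : nat) (ll : bool) lb lsh lsg (ld : 'I_N.+1) rb rsh rsg (rd : 'I_N.+1) :
  let l := mkSt ll lb lsh lsg ld in let r := mkSt false rb rsh rsg rd in
  d.+1 < n -> n <= N -> ll = (d == 0) ->
  (if ll then nat_of_ord ld = 0 else ld + n <= N + d) ->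
  rd + n <= N + d.+1 ->
  let l' := (delta l r).1 in let r' := (delta l r).2 in
  nat_of_ord (bullet r') = 2 -> nat_of_ord rb = 2 \/
         (nat_of_ord lb = 2 /\ (good l d -> (ll -> lsh) ->
            [/\ good l' d, good r' d.+1 & (ll -> shield l')])) \/
         [/\ ll, good l' 0, good r' 1 & shield l'].
Proof.
rewrite /=; move=> Hdn HnN Hll Hld Hrd.
case: lb => [[|[|[|?]]] Hlb] //; case: rb => [[|[|[|?]]] Hrb] //.
all: case: ll Hll Hld => Hll Hld.
all: rewrite /delta /=.
all: crush.
Qed.

Lemma wr1 (N : nat) (n : nat) lb lsh lsg (ld : 'I_N.+1) rb rsh rsg (rd : 'I_N.+1) :
  let l := mkSt false lb lsh lsg ld in let r := mkSt true rb rsh rsg rd in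
  1 < n -> n <= N -> ld + n <= N + n.-1 -> nat_of_ord rd = 0 ->
  let l' := (delta l r).1 in let r' := (delta l r).2 in
  (nat_of_ord lb = 2 -> rsh /\ rsg = false) -> leader l' = false /\ leader r' = true.
Proof.
rewrite /=; move=> Hn HnN Hld Hrd.
case: lb => [[|[|[|?]]] Hlb] //; case: rb => [[|[|[|?]]] Hrb] //.
all: rewrite /delta /=.
all: crush.
Qed.

Lemma wr2 (N : nat) (n : nat) lb lsh lsg (ld : 'I_N.+1) rb rsh rsg (rd : 'I_N.+1) :
  let l := mkSt false lb lsh lsg ld in let r := mkSt true rb rsh rsg rd in
  1 < n -> n <= N -> ld + n <= N + n.-1 -> nat_of_ord rd = 0 ->
  let l' := (delta l r).1 in let r' := (delta l r).2 in
  dist l' + n <= N + n.-1 /\ nat_of_ord (dist r') = 0.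
Proof.
rewrite /=; move=> Hn HnN Hld Hrd.
case: lb => [[|[|[|?]]] Hlb] //; case: rb => [[|[|[|?]]] Hrb] //.
all: rewrite /delta /=.
all: crush.
Qed.

Lemma wr3 (N : nat) (n : nat) lb lsh lsg (ld : 'I_N.+1) rb rsh rsg (rd : 'I_N.+1) :
  let l := mkSt false lb lsh lsg ld in let r := mkSt true rb rsh rsg rd in
  1 < n -> n <= N -> ld + n <= N + n.-1 -> nat_of_ord rd = 0 ->
  let l' := (delta l r).1 in let r' := (delta l r).2 in
  nat_of_ord (bullet l') <> 2.
Proof.
rewrite /=; move=> Hn HnN Hld Hrd.
case: lb => [[|[|[|?]]] Hlb] //; case: rb => [[|[|[|?]]] Hrb] //.
all: rewrite /delta /=.
all: crush.
Qed.

Lemma wr4 (N : nat) (n : nat) lb lsh lsg (ld : 'I_N.+1) rb rsh rsg (rd : 'I_N.+1) :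
  let l := mkSt false lb lsh lsg ld in let r := mkSt true rb rsh rsg rd in
  1 < n -> n <= N -> ld + n <= N + n.-1 -> nat_of_ord rd = 0 ->
  let l' := (delta l r).1 in let r' := (delta l r).2 in
  rsh -> good r 0 -> shield r' /\ good r' 0.
Proof.
rewrite /=; move=> Hn HnN Hld Hrd.
case: lb => [[|[|[|?]]] Hlb] //; case: rb => [[|[|[|?]]] Hrb] //.
all: rewrite /delta /=.
all: crush.
Qed.

Lemma wr5 (N : nat) (n : nat) lb lsh lsg (ld : 'I_N.+1) rb rsh rsg (rd : 'I_N.+1) :
  let l := mkSt false lb lsh lsg ld in let r := mkSt true rb rsh rsg rd in
  1 < n -> n <= N -> ld + n <= N + n.-1 -> nat_of_ord rd = 0 ->
  let l' := (delta l r).1 in let r' := (delta l r).2 in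
  nat_of_ord (bullet r') = 2 -> nat_of_ord rb = 2.
Proof.
rewrite /=; move=> Hn HnN Hld Hrd.
case: lb => [[|[|[|?]]] Hlb] //; case: rb => [[|[|[|?]]] Hrb] //.
all: rewrite /delta /=.
all: crush.
Qed.


Lemma midG N n d (l r : St N) : d.+1 < n -> n <= N -> leader l = (d == 0) -> leader r = false ->
 (if d == 0 then nat_of_ord (dist l) = 0 else dist l + n <= N + d) -> dist r + n <= N + d.+1 ->
 let l' := (delta l r).1 in let r' := (delta l r).2 in
 [/\ leader l' = (d==0) /\ leader r' = false,
     (if d == 0 then nat_of_ord (dist l') = 0 else dist l' + n <= N + d) /\ dist r' + n <= N + d.+1,
     nat_of_ord (bullet l') <> 2,
     (good l d -> good r d.+1 -> (d == 0 -> shield l) ->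
        [/\ good l' d, good r' d.+1 & (d == 0 -> shield l')]) &
     (nat_of_ord (bullet r') = 2 -> nat_of_ord (bullet r) = 2 \/
         (nat_of_ord (bullet l) = 2 /\ (good l d -> (d == 0 -> shield l) ->
            [/\ good l' d, good r' d.+1 & (d == 0 -> shield l')])) \/
         [/\ d == 0, good l' 0, good r' 1 & shield l'])].
Proof.
case: l => ll lb lsh lsg ld; case: r => rl rb rsh rsg rd.
move=> Hdn HnN Hll Hrl Hld Hrd.
change (ll = (d==0)) in Hll. change (rl = false) in Hrl. subst rl.
have h1 := @mid1 N n d ll lb lsh lsg ld rb rsh rsg rd Hdn HnN Hll. have h2 := @mid2 N n d ll lb lsh lsg ld rb rsh rsg rd Hdn HnN Hll. have h3 := @mid3 N n d ll lb lsh lsg ld rb rsh rsg rd Hdn HnN Hll.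
have h4 := @mid4 N n d ll lb lsh lsg ld rb rsh rsg rd Hdn HnN Hll. have h5 := @mid5 N n d ll lb lsh lsg ld rb rsh rsg rd Hdn HnN Hll.
subst ll.
cbv zeta in h1, h2, h3, h4, h5 |- *.
split.
- exact: h1.
- exact: h2.
- exact: h3 Hld Hrd.
- exact: h4 Hld Hrd.
- exact: h5 Hld Hrd.
Qed.

Lemma wrG N n (l r : St N) : 1 < n -> n <= N -> leader l = false -> leader r = true ->
 dist l + n <= N + n.-1 -> nat_of_ord (dist r) = 0 ->
 let l' := (delta l r).1 in let r' := (delta l r).2 in
 [/\ (nat_of_ord (bullet l) = 2 -> shield r /\ signal r = false) -> leader l' = false /\ leader r' = true,
     dist l' + n <= N + n.-1 /\ nat_of_ord (dist r') = 0,
     nat_of_ord (bullet l') <> 2,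
     (shield r -> good r 0 -> shield r' /\ good r' 0) &
     (nat_of_ord (bullet r') = 2 -> nat_of_ord (bullet r) = 2)].
Proof.
case: l => ll lb lsh lsg ld; case: r => rl rb rsh rsg rd.
move=> Hn HnN Hll Hrl Hld Hrd.
change (ll = false) in Hll. change (rl = true) in Hrl. subst rl ll.
have h1 := @wr1 N n lb lsh lsg ld rb rsh rsg rd Hn HnN Hld Hrd. have h2 := @wr2 N n lb lsh lsg ld rb rsh rsg rd Hn HnN Hld Hrd. have h3 := @wr3 N n lb lsh lsg ld rb rsh rsg rd Hn HnN Hld Hrd.
have h4 := @wr4 N n lb lsh lsg ld rb rsh rsg rd Hn HnN Hld Hrd. have h5 := @wr5 N n lb lsh lsg ld rb rsh rsg rd Hn HnN Hld Hrd.
cbv zeta in h1, h2, h3, h4, h5 |- *.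
by split.
Qed.


Definition InvF N n (g : nat -> St N) : Prop :=
  [/\ forall e, e < n -> leader (g e) = (e == 0),
      nat_of_ord (dist (g 0)) = 0,
      forall e, 0 < e < n -> dist (g e) + n <= N + e &
      forall d, d < n -> nat_of_ord (bullet (g d)) = 2 ->
        shield (g 0) /\ forall e, e <= d -> good (g e) e].

Lemma goodG N (g : nat -> St N) (L R : St N) (d m : nat) :
  (d != 0 -> shield (g 0)) -> (d == 0 -> shield L) ->
  (forall e, e <= m -> e != d -> e != d.+1 -> good (g e) e) ->
  (d <= m -> good L d) -> (d.+1 <= m -> good R d.+1) ->
  shield (if 0 == d then L else if 0 == d.+1 then R else g 0) /\
  forall e, e <= m -> good (if e == d then L else if e == d.+1 then R else g e) e.
Proof.
move=> H1 H2 H3 H4 H5; split.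
  by case: eqP => [Hd|/eqP Hd]; [apply: H2; rewrite -Hd | case: eqP => // _; apply: H1; rewrite eq_sym].
move=> e He; case: eqP => [Hd|/eqP Hd]; first by subst e; exact: H4.
case: eqP => [Hd1|/eqP Hd1]; first by subst e; exact: H5.
exact: H3.
Qed.

Lemma InvF_mid N n (g : nat -> St N) d : 1 < n -> n <= N -> d.+1 < n -> InvF n g ->
  InvF n (fun e => if e == d then (delta (g d) (g d.+1)).1
                   else if e == d.+1 then (delta (g d) (g d.+1)).2 else g e).
Proof.
move=> Hn HnN Hdn [HA HB0 HB HC].
have Hl : leader (g d) = (d == 0) by apply: HA; lia.
have Hr : leader (g d.+1) = false by rewrite HA.
have Hld : if d == 0 then nat_of_ord (dist (g d)) = 0 else dist (g d) + n <= N + d.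
  by case: eqP => [->|?] //; apply: HB; lia.
have Hrd : dist (g d.+1) + n <= N + d.+1 by apply: HB; lia.
have [[M1a M1b] [M2a M2b] M3 M4 M5] := midG Hdn HnN Hl Hr Hld Hrd.
move: M1a M1b M2a M2b M3 M4 M5.
move: (delta (g d) (g d.+1)) => [L R] /= M1a M1b M2a M2b M3 M4 M5.
split.
- move=> e He; case: eqP => [->|Hed]; first by rewrite M1a.
  case: eqP => [->|Hed1] //; exact: HA.
- have [Hd0|Hd0] := eqVneq d 0.
    by subst d; exact M2a.
  exact HB0.
- move=> e He; case: eqP => [He'|Hed].
    by subst e; move: M2a; case: eqP => // ?; lia.
  case: eqP => [->|Hed1] //; exact: HB.
- move=> d' Hd'; case: eqP => [-> /M3 //|/eqP Hd'd].
  case: eqP => [->|/eqP Hd'd1] Hb.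
  + have HX : (d != 0 -> shield (g 0)) /\ (forall e, e <= d -> good (g e) e) /\
              [/\ good L d, good R d.+1 & (d == 0 -> shield L)] \/
              [/\ d == 0, good L 0, good R 1 & shield L].
      case: (M5 Hb) => [Hb2|[[Hb2 Himp]|H3]]; last by right.
      * have [Hs Hg] := HC _ Hdn Hb2; left; split => // ; split; first by move=> e He; apply: Hg; lia.
        apply: M4; [exact: Hg | exact: Hg | by move/eqP=> Hd; subst d].
      * have [Hs Hg] := HC _ (ltnW Hdn) Hb2; left; split => //; split => //.
        apply: Himp; [exact: Hg | by move/eqP=> Hd; subst d].
    case: HX => [[Hs [Hg [GL GR GS]]]|[Hd0 GL GR GS]].
    * refine (@goodG N g L R d d.+1 _ _ _ _ _) => //; move=> e He /eqP He1 /eqP He2; apply: Hg; lia.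
    * move/eqP: Hd0 => Hd0; subst d; split; first exact: GS.
      move=> e He; case: eqP => [->|?] //; case: eqP => [->|?] //; lia.
  + have [Hs Hg] := HC _ Hd' Hb.
    have [Hlt|Hgt] := ltnP d' d.
    * refine (@goodG N g L R d d' _ _ _ _ _) => //.
      - move=> /eqP Hd0; lia.
      - move=> e He _ _; exact: Hg.
      - move=> ?; lia.
      - move=> ?; lia.
    * have Hgt' : d.+1 < d' by lia.
      have [GL GR GS] : [/\ good L d, good R d.+1 & (d == 0 -> shield L)].
        apply: M4; [apply: Hg; lia | apply: Hg; lia | by move/eqP=> Hd; subst d].
      refine (@goodG N g L R d d' _ _ _ _ _) => //.
      move=> e He _ _; exact: Hg.
Qed.

Lemma InvF_wrap N n (g : nat -> St N) : 1 < n -> n <= N -> InvF n g ->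
  InvF n (fun e => if e == n.-1 then (delta (g n.-1) (g 0)).1
                   else if e == 0 then (delta (g n.-1) (g 0)).2 else g e).
Proof.
move=> Hn HnN [HA HB0 HB HC].
have Hl : leader (g n.-1) = false by rewrite HA; [apply/eqP; lia | lia].
have Hr : leader (g 0) = true by rewrite HA //; lia.
have Hld : dist (g n.-1) + n <= N + n.-1 by apply: HB; lia.
have [W1 [W2a W2b] W3 W4 W5] := wrG Hn HnN Hl Hr Hld HB0.
have Hpre : nat_of_ord (bullet (g n.-1)) = 2 -> shield (g 0) /\ signal (g 0) = false.
  move=> Hb; have [Hs Hg] := HC n.-1 ltac:(lia) Hb; split => //.
  by case: (Hg 0 (leq0n _)).
have [W1a W1b] := W1 Hpre.
move: W1a W1b W2a W2b W3 W4 W5.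
move: (delta (g n.-1) (g 0)) => [L R] /= W1a W1b W2a W2b W3 W4 W5.
have Hn0 : (0 == n.-1) = false by apply/eqP; lia.
split.
- move=> e He; case: eqP => [He1|Hed].
    by subst e; rewrite W1a; apply/esym/eqP; lia.
  case: eqP => [He0|Hed1]; first by subst e.
  by rewrite HA //; apply/eqP.
- by cbv beta; rewrite Hn0.
- move=> e He; case: eqP => [He1|Hed]; first by subst e.
  case: eqP => [He0|Hed1]; first lia.
  exact: HB.
- move=> d' Hd'; case: eqP => [Hd1 Hb|/eqP Hd'd]; first by move: Hb => /W3.
  rewrite Hn0.
  case: eqP => [Hd0|/eqP Hd'0] Hb.
  + subst d'; have [Hs Hg] := HC 0 Hd' (W5 Hb).
    have [SR GR] := W4 Hs (Hg 0 (leqnn 0)); split => // e; rewrite leqn0 => /eqP He.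
    by subst e; rewrite Hn0.
  + have [Hs Hg] := HC d' Hd' Hb.
    have [SR GR] := W4 Hs (Hg 0 (leq0n _)); split => // e He.
    case: eqP => [He1|/eqP He1]; first lia.
    case: eqP => [He0|/eqP He0]; first by subst e.
    exact: Hg.
Qed.


Definition gC N n (C : config N n) (l : 'I_n) : nat -> St N := fun e => C (fwd e l).

Lemma fwd_eq0 n (l : 'I_n) e : e < n -> (fwd e l == l) = (e == 0).
Proof. move=> He; rewrite -{2}[l]/(fwd 0 l) fwd_eq //; lia. Qed.

Lemma Inv_lead N n (C : config N n) l : InvF n (gC C l) -> forall k, leader (C k) = (k == l).
Proof.
move=> [HA _ _ _] k; have [e He ->] := fwd_surj l k.
by rewrite fwd_eq0 // -HA.
Qed.

Lemma InvF_ext N n (g h : nat -> St N) : 0 < n -> (forall e, e < n -> g e = h e) -> InvF n g -> InvF n h.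
Proof.
move=> H0 Hgh [HA HB0 HB HC].
split.
- by move=> e He; rewrite -Hgh // HA.
- by rewrite -Hgh.
- by move=> e He; rewrite -Hgh ?HB //; case/andP: He.
- move=> d Hd; rewrite -Hgh // => Hb; have [Hs Hg] := HC d Hd Hb.
  split; first by rewrite -Hgh.
  move=> e He; rewrite -Hgh; [exact: Hg | exact: leq_ltn_trans He Hd].
Qed.

Lemma toInv N n (C : config N n) l : (forall k, leader (C k) = (k == l)) -> n <= N ->
  C_NI C -> InvF n (gC C l).
Proof.
move=> Hl HnN [[_ HPB] [Hsec HM]].
have H0 : 0 < n by exact: leq_ltn_trans (leq0n _) (ltn_ord l).
split.
- by move=> e He; rewrite /gC Hl fwd_eq0.
- by have := Hsec l; rewrite /secure Hl eqxx.
- move=> e /andP [He0 He]; have := Hsec (fwd e l); rewrite /secure Hl fwd_eq0 //.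
  have -> : (e == 0) = false by apply/eqP; lia.
  rewrite distR_fwd ?He0 ?He //; rewrite /gC; lia.
- move=> d Hd Hb; have [[Hsh Hsg] Hdist] := HM _ Hb.
  rewrite distL_fwd // in Hsh Hsg Hdist.
  rewrite back_fwd // subnn in Hsh; split => // e He.
  have Hde : d - e <= d by exact: leq_subr.
  split.
  + by have := Hsg _ Hde; rewrite back_fwd // subKn.
  + have := Hdist _ Hde; rewrite back_fwd // subKn // distL_fwd //.
    exact: leq_ltn_trans He Hd.
Qed.

Lemma modest_of N n (C : config N n) l d : (forall k, leader (C k) = (k == l)) -> d < n ->
  shield (C l) -> (forall e, e <= d -> good (C (fwd e l)) e) -> modest C (fwd d l).
Proof.
move=> Hl Hd Hs Hg; rewrite /modest /peaceful distL_fwd //.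
rewrite back_fwd // subnn; split; [split|] => //.
- by move=> j Hj; rewrite back_fwd //; case: (Hg (d - j) (leq_subr _ _)).
- move=> j Hj; rewrite back_fwd // (distL_fwd Hl); last by apply: leq_ltn_trans Hd; exact: leq_subr.
  by case: (Hg (d - j) (leq_subr _ _)).
Qed.

Lemma fromInv N n (C : config N n) l : 1 < n -> n <= N -> InvF n (gC C l) -> C_NI C.
Proof.
move=> Hn HnN HI; have Hl := Inv_lead HI; case: HI => [HA HB0 HB HC].
have Hmod : forall j, nat_of_ord (bullet (C j)) = 2 -> modest C j.
  move=> j; have [d Hd ->] := fwd_surj l j => Hb.
  have [Hs Hg] := HC d Hd Hb; exact: modest_of.
split; [split|split].
- by exists l; rewrite Hl.
- by move=> j /Hmod [].
- move=> i; have [e He ->] := fwd_surj l i.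
  rewrite /secure Hl fwd_eq0 //; case: eqP => [->|He0]; first exact: HB0.
  rewrite (distR_fwd Hl); last by apply/andP; split => //; lia.
  have := HB e ltac:(lia); rewrite /gC; lia.
- exact: Hmod.
Qed.

Lemma stepInv N n (C C' : config N n) l : 1 < n -> n <= N -> InvF n (gC C l) -> step C C' ->
  InvF n (gC C' l).
Proof.
move=> Hn HnN HI [i ->]; have [d Hd ->] := fwd_surj l i.
have H0 : 0 < n by lia.
case: (ltngtP d.+1 n) => [Hdn||Hdn]; [|lia|].
- apply: (InvF_ext H0 _ (InvF_mid Hn HnN Hdn HI)) => e He.
  rewrite /gC /interact fwd_eq // -[rnext (fwd d l)]/(fwd d.+1 l) fwd_eq //.
- have Hd1 : d = n.-1 by lia.
  subst d.
  apply: (InvF_ext H0 _ (InvF_wrap Hn HnN HI)) => e He.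
  have Hr : rnext (fwd n.-1 l) = fwd 0 l.
    by rewrite -[rnext _]/(fwd n.-1.+1 l) prednK // fwd_n.
  by rewrite /gC /interact fwd_eq // Hr fwd_eq.
Qed.

Theorem lemma8 (N n : nat) (hn : 2 <= n) (hnN : n <= N) :
  (forall C C' : config N n, S_RL C -> reachable C C' -> S_RL C') /\
  (forall C : config N n, S_RL C -> safe C).
Proof.
have reach : forall (C C' : config N n) l, InvF n (gC C l) -> reachable C C' -> InvF n (gC C' l).
  move=> C C' l HI; elim=> [|C1 C2 _ IH Hs] //; exact: stepInv Hs.
split.
- move=> C C' [HNI [l Hl]] HR.
  have HI' := reach _ _ _ (toInv Hl hnN HNI) HR.
  split; first exact: fromInv HI'.
  by exists l; exact: Inv_lead HI'.
- move=> C [HNI [l Hl]]; split; first by exists l.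
  move=> C' HR i; have HI' := reach _ _ _ (toInv Hl hnN HNI) HR.
  by rewrite /out (Inv_lead HI') Hl.
Qed.
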